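(* Let $\alpha: I\to M$ be a unit-speed curve on an oriented surface $M\subset E^3$ with Darboux frame $\{T,V,U\}$ and curvatures $k_g,k_n,\tau_g$, and assume $(k_n(s),\tau_g(s))\neq(0,0)$ for all $s$. Let $\gamma(s)=\alpha(s)+y_1(s)T(s)+y_2(s)V(s)+y_3(s)U(s)$, with $y_i$ smooth, be an associated curve whose tangent $\gamma'(s)$ is linearly dependent with $U(s)$, i.e. $\gamma'(s)=R(s)U(s)$ with $R(s)\neq0$ for all $s$. Then the following are equivalent: (i) $\gamma$ is a general helix; (ii) $\alpha$ is an isophote curve; (iii) $\alpha$ is a $D_o$-Darboux slant helix.
   Context: $M$ is an oriented surface in Euclidean 3-space $E^3$ and $\alpha:I\to M$ is a unit-speed curve with arc-length parameter $s$. Its Darboux frame $\{T,V,U\}$ consists of the unit tangent $T=\alpha'$, the unit surface normal $U$ of $M$ along $\alpha$, and $V=U\times T$; it satisfies $T'=k_gV+k_nU$, $V'=-k_gT+\tau_gU$, $U'=-k_nT-\tau_gV$, where $k_g,k_n,\tau_g$ are the geodesic curvature, normal curvature and geodesic torsion. A regular curve is a general helix if its unit tangent makes a constant angle with a fixed direction. $\alpha$ is an isophote curve if $\langle U,l\rangle$ is constant for some fixed unit vector $l$. The osculating Darboux vector field is $D_o=\tau_gT-k_nV$; $\alpha$ is a $D_o$-Darboux slant helix if $D_o/\|D_o\|$ makes a constant angle with a fixed unit direction. *)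

(* Defs.v *)
From Stdlib Require Import Reals.
From Coquelicot Require Import Coquelicot.
Open Scope R_scope.

Record vec3 := V3 { v1 : R; v2 : R; v3 : R }.

Definition vzero : vec3 := V3 0 0 0.
Definition vadd (a b : vec3) : vec3 := V3 (v1 a + v1 b) (v2 a + v2 b) (v3 a + v3 b).
Definition vscal (r : R) (a : vec3) : vec3 := V3 (r * v1 a) (r * v2 a) (r * v3 a).
Definition vsub (a b : vec3) : vec3 := vadd a (vscal (-1) b).
Definition dot (a b : vec3) : R := v1 a * v1 b + v2 a * v2 b + v3 a * v3 b.
Definition cross (a b : vec3) : vec3 :=
  V3 (v2 a * v3 b - v3 a * v2 b) (v3 a * v1 b - v1 a * v3 b) (v1 a * v2 b - v2 a * v1 b).
Definition vnorm (a : vec3) : R := sqrt (dot a a).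
Definition vunit (a : vec3) : vec3 := vscal (/ vnorm a) a.

Definition in_interval (a b : Rbar) (s : R) : Prop := Rbar_lt a s /\ Rbar_lt s b.

Definition has_vderive (f : R -> vec3) (s : R) (v : vec3) : Prop :=
  is_derive (fun t => v1 (f t)) s (v1 v) /\
  is_derive (fun t => v2 (f t)) s (v2 v) /\
  is_derive (fun t => v3 (f t)) s (v3 v).

Definition ex_vderive (f : R -> vec3) (s : R) : Prop :=
  ex_derive (fun t => v1 (f t)) s /\ ex_derive (fun t => v2 (f t)) s /\
  ex_derive (fun t => v3 (f t)) s.

Definition vDerive (f : R -> vec3) (s : R) : vec3 :=
  V3 (Derive (fun t => v1 (f t)) s) (Derive (fun t => v2 (f t)) s)
     (Derive (fun t => v3 (f t)) s).

Definition smooth_on (P : R -> Prop) (f : R -> R) : Prop :=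
  forall (n : nat) (s : R), P s -> ex_derive_n f n s.

Definition vsmooth_on (P : R -> Prop) (f : R -> vec3) : Prop :=
  smooth_on P (fun t => v1 (f t)) /\ smooth_on P (fun t => v2 (f t)) /\
  smooth_on P (fun t => v3 (f t)).

Definition darboux_frame (P : R -> Prop) (alpha T V U : R -> vec3)
  (kg kn tg : R -> R) : Prop :=
  forall s, P s ->
    has_vderive alpha s (T s) /\
    vnorm (T s) = 1 /\ vnorm (U s) = 1 /\ dot (T s) (U s) = 0 /\
    V s = cross (U s) (T s) /\
    has_vderive T s (vadd (vscal (kg s) (V s)) (vscal (kn s) (U s))) /\
    has_vderive V s (vadd (vscal (- kg s) (T s)) (vscal (tg s) (U s))) /\
    has_vderive U s (vadd (vscal (- kn s) (T s)) (vscal (- tg s) (V s))).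

Definition general_helix (P : R -> Prop) (c : R -> vec3) : Prop :=
  (forall s, P s -> ex_vderive c s /\ vDerive c s <> vzero) /\
  exists (d : vec3) (k : R), vnorm d = 1 /\
    forall s, P s -> dot (vunit (vDerive c s)) d = k.

Definition isophote (P : R -> Prop) (U : R -> vec3) : Prop :=
  exists (l : vec3) (k : R), vnorm l = 1 /\ forall s, P s -> dot (U s) l = k.

Definition osc_darboux (T V : R -> vec3) (kn tg : R -> R) (s : R) : vec3 :=
  vsub (vscal (tg s) (T s)) (vscal (kn s) (V s)).

Definition Do_slant_helix (P : R -> Prop) (T V : R -> vec3) (kn tg : R -> R) : Prop :=
  exists (d : vec3) (k : R), vnorm d = 1 /\
    forall s, P s -> dot (vunit (osc_darboux T V kn tg s)) d = k.

(* Main.v *)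
Require Import Defs.
From Stdlib Require Import Reals Lra Psatz Classical.
From Coquelicot Require Import Coquelicot.
Open Scope R_scope.

Lemma I_open a b s : in_interval a b s -> locally s (in_interval a b).
Proof.
  intros H. apply (locally_open (T:=R_UniformSpace) (fun u : R => Rbar_lt a u /\ Rbar_lt u b)); auto.
  apply open_and; [apply open_Rbar_gt | apply open_Rbar_lt].
Qed.

Lemma eq_loc a b (f g : R -> R) s :
  (forall u, in_interval a b u -> f u = g u) -> in_interval a b s ->
  locally s (fun u => f u = g u).
Proof. intros H Hs. apply (filter_imp (in_interval a b)); auto. apply I_open; auto. Qed.

Lemma I_between a b s t c : in_interval a b s -> in_interval a b t ->
  Rmin s t <= c <= Rmax s t -> in_interval a b c.
Proof.
  intros [H1 H2] [H3 H4] [H5 H6]. split.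
  - destruct a as [a| |]; simpl in *; auto.
    apply Rlt_le_trans with (Rmin s t); auto. apply Rmin_case; auto.
  - destruct b as [b| |]; simpl in *; auto.
    apply Rle_lt_trans with (Rmax s t); auto. apply Rmax_case; auto.
Qed.

Lemma exd_cont (f : R -> R) s : ex_derive f s -> continuous f s.
Proof. intros H. apply (ex_derive_continuous (K:=R_AbsRing) (V:=R_NormedModule)); auto. Qed.

Lemma isd_plus (f g : R -> R) s df dg : is_derive f s df -> is_derive g s dg ->
  is_derive (fun t => f t + g t) s (df + dg).
Proof. intros; apply (is_derive_plus (K:=R_AbsRing) (V:=R_NormedModule)); auto. Qed.
Lemma isd_mult (f g : R -> R) s df dg : is_derive f s df -> is_derive g s dg ->
  is_derive (fun t => f t * g t) s (df * g s + f s * dg).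
Proof. intros; apply (is_derive_mult (K:=R_AbsRing)); auto. intros; apply Rmult_comm. Qed.
Lemma isd_const (c s : R) : is_derive (fun _ => c) s 0.
Proof. apply (is_derive_const (K:=R_AbsRing) (V:=R_NormedModule)). Qed.
Lemma cont_plus (f g : R -> R) s : continuous f s -> continuous g s -> continuous (fun t => f t + g t) s.
Proof. intros; apply (continuous_plus (U:=R_UniformSpace) (V:=R_NormedModule)); auto. Qed.
Lemma cont_mult (f g : R -> R) s : continuous f s -> continuous g s -> continuous (fun t => f t * g t) s.
Proof. intros; apply (continuous_mult (U:=R_UniformSpace) (K:=R_AbsRing)); auto. Qed.
Lemma cont_opp (f : R -> R) s : continuous f s -> continuous (fun t => - f t) s.
Proof. intros; apply (continuous_opp (U:=R_UniformSpace) (V:=R_NormedModule)); auto. Qed.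
Lemma cont_const (c s : R) : continuous (fun _ => c) s.
Proof. apply (continuous_const (U:=R_UniformSpace) (V:=R_UniformSpace)). Qed.

Definition C1 a b (f : R -> R) :=
  forall s, in_interval a b s -> ex_derive f s /\ continuous (Derive f) s.

Lemma C1_cont a b f s : C1 a b f -> in_interval a b s -> continuous f s.
Proof. intros H Hs. apply exd_cont. apply H; auto. Qed.

Lemma C1_ext a b f g : (forall s, in_interval a b s -> f s = g s) -> C1 a b g -> C1 a b f.
Proof.
  intros E H s Hs. destruct (H s Hs) as [H1 H2]. split.
  - apply (ex_derive_ext_loc g). apply (filter_imp (fun u => f u = g u)).
    { intros; congruence. } apply (eq_loc a b); auto. auto.
  - apply (continuous_ext_loc _ (Derive g)); auto.
    apply (filter_imp (in_interval a b)). 2: apply I_open; auto.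
    intros u Hu. apply Derive_ext_loc. apply (filter_imp (fun u => f u = g u)).
    { intros; congruence. } apply (eq_loc a b); auto.
Qed.

Lemma Derive_loc a b f g s : (forall u, in_interval a b u -> Derive f u = g u) ->
  in_interval a b s -> continuous g s -> continuous (Derive f) s.
Proof.
  intros E Hs Hc. apply (continuous_ext_loc _ g); auto.
  apply (filter_imp (fun u => Derive f u = g u)). { intros; congruence. }
  apply (eq_loc a b); auto.
Qed.

Lemma C1_plus a b f g : C1 a b f -> C1 a b g -> C1 a b (fun t => f t + g t).
Proof.
  intros Hf Hg s Hs. split.
  - eexists; apply isd_plus; apply Derive_correct; [apply Hf|apply Hg]; auto.
  - apply (Derive_loc a b _ (fun u => Derive f u + Derive g u)); auto.
    + intros u Hu. apply is_derive_unique. apply isd_plus;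
      apply Derive_correct; [apply Hf|apply Hg]; auto.
    + apply cont_plus; [apply Hf|apply Hg]; auto.
Qed.

Lemma C1_mult a b f g : C1 a b f -> C1 a b g -> C1 a b (fun t => f t * g t).
Proof.
  intros Hf Hg s Hs. split.
  - eexists; apply isd_mult; apply Derive_correct; [apply Hf|apply Hg]; auto.
  - apply (Derive_loc a b _ (fun u => Derive f u * g u + f u * Derive g u)); auto.
    + intros u Hu. apply is_derive_unique. apply isd_mult;
      apply Derive_correct; try apply Hf; try apply Hg; auto.
    + apply cont_plus; apply cont_mult.
      exact (proj2 (Hf s Hs)). exact (C1_cont a b g s Hg Hs).
      exact (C1_cont a b f s Hf Hs). exact (proj2 (Hg s Hs)).
Qed.

Lemma C1_const a b c : C1 a b (fun _ => c).
Proof.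
  intros s Hs. split. eexists; apply isd_const.
  apply (Derive_loc a b _ (fun _ => 0)); auto.
  intros; apply Derive_const. apply cont_const.
Qed.

Lemma C1_opp a b f : C1 a b f -> C1 a b (fun t => - f t).
Proof.
  intros Hf. apply (C1_ext a b _ (fun t => (-1) * f t)). intros; ring.
  apply C1_mult; auto. apply C1_const.
Qed.

Lemma C1_inv a b f : C1 a b f -> (forall s, in_interval a b s -> f s <> 0) ->
  C1 a b (fun t => / f t).
Proof.
  intros Hf Hn s Hs. split.
  - eexists. apply is_derive_inv. apply Derive_correct, Hf; auto. auto.
  - apply (Derive_loc a b _ (fun u => - Derive f u / f u ^ 2)); auto.
    + intros u Hu. apply is_derive_unique. apply is_derive_inv; auto.
      apply Derive_correct, Hf; auto.
    + unfold Rdiv. apply cont_mult.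
      * apply cont_opp. apply Hf; auto.
      * apply continuous_Rinv_comp. 2: { apply pow_nonzero; auto. }
        simpl. apply cont_mult. apply (C1_cont a b); auto.
        apply cont_mult. apply (C1_cont a b); auto. apply cont_const.
Qed.

Lemma C1_sqrt a b f : C1 a b f -> (forall s, in_interval a b s -> 0 < f s) ->
  C1 a b (fun t => sqrt (f t)).
Proof.
  intros Hf Hn s Hs. split.
  - eexists. apply is_derive_sqrt. apply Derive_correct, Hf; auto. auto.
  - apply (Derive_loc a b _ (fun u => Derive f u / (2 * sqrt (f u)))); auto.
    + intros u Hu. apply is_derive_unique. apply is_derive_sqrt; auto.
      apply Derive_correct, Hf; auto.
    + unfold Rdiv. apply cont_mult.
      * apply Hf; auto.
      * apply continuous_Rinv_comp.
        2: { apply Rgt_not_eq. apply Rmult_lt_0_compat. lra. apply sqrt_lt_R0; auto. }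
        apply cont_mult. apply cont_const.
        apply continuous_sqrt_comp. apply (C1_cont a b); auto.
Qed.

Lemma smooth_C1 a b f : smooth_on (in_interval a b) f -> C1 a b f.
Proof.
  intros H s Hs. split.
  - exact (H 1%nat s Hs).
  - apply exd_cont. exact (H 2%nat s Hs).
Qed.

Lemma smooth_C1D a b f : smooth_on (in_interval a b) f -> C1 a b (Derive f).
Proof.
  intros H s Hs. split.
  - exact (H 2%nat s Hs).
  - apply exd_cont. exact (H 3%nat s Hs).
Qed.


Lemma loc_ball (s : R) (P : R -> Prop) : locally s P ->
  exists e, 0 < e /\ forall u, Rabs (u - s) < e -> P u.
Proof. intros [eps H]. exists eps. split. apply cond_pos. intros u Hu. apply H. exact Hu. Qed.

Lemma conn_dir a b (P : R -> Prop) :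
  (forall t, in_interval a b t -> locally t (fun u => P u <-> P t)) ->
  forall s t, in_interval a b s -> in_interval a b t -> s < t -> P s -> ~ P t -> False.
Proof.
  intros HL s t Hs Ht Hst Ps nPt.
  set (E := fun u => s <= u <= t /\ forall v, s <= v <= u -> P v).
  assert (Hb : bound E). { exists t. intros u [[_ h] _]. auto. }
  assert (He : exists x, E x). { exists s. split. lra. intros v Hv. replace v with s by lra. auto. }
  destruct (completeness E Hb He) as [m [Hub Hlub]].
  assert (Hsm : s <= m). { apply Hub. destruct He; unfold E. split. lra. intros v Hv. replace v with s by lra. auto. }
  assert (Hmt : m <= t). { apply Hlub. intros u [[_ h] _]. auto. }
  assert (Hm : in_interval a b m).
  { apply (I_between a b s t); auto. rewrite Rmin_left, Rmax_right; lra. }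
  assert (below : forall v, s <= v < m -> P v).
  { intros v Hv. destruct (classic (exists e, E e /\ v < e)) as [[e [[_ He2] Hve]]|Hn].
    - apply He2. lra.
    - exfalso. assert (m <= v). { apply Hlub. intros u Hu. destruct (Rle_dec u v); auto.
        exfalso. apply Hn. exists u. split; auto. lra. } lra. }
  destruct (loc_ball m _ (HL m Hm)) as [e [He0 Hball]].
  destruct (classic (P m)) as [Pm|nPm].
  - assert (m < t). { destruct (Req_dec m t); [subst; tauto|lra]. }
    set (u := Rmin (m + e/2) t).
    assert (Hu1 : m < u /\ u <= t /\ u <= m + e/2).
    { unfold u. apply Rmin_case_strong; intros; lra. }
    assert (Eu : E u).
    { split. lra. intros v Hv.
      destruct (Rlt_dec v m). apply below; lra.
      apply (proj2 (Hball v ltac:(apply Rabs_def1; lra))). auto. }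
    assert (u <= m) by (apply Hub; auto). lra.
  - assert (s < m). { destruct (Req_dec s m); [subst; tauto|lra]. }
    destruct (classic (exists x, E x /\ m - e/2 < x)) as [[x [Ex Hx2]]|Hn].
    + apply nPm. assert (x <= m) by (apply Hub; auto). destruct Ex as [Hx1 Hx].
      apply (Hball x). apply Rabs_def1; lra. apply Hx. lra.
    + assert (m <= m - e/2). { apply Hlub. intros u Hu. destruct (Rle_dec u (m - e/2)); auto.
        exfalso. apply Hn. exists u. split; auto. lra. } lra.
Qed.

Lemma connect a b (P : R -> Prop) :
  (forall t, in_interval a b t -> locally t (fun u => P u <-> P t)) ->
  forall s t, in_interval a b s -> in_interval a b t -> P s -> P t.
Proof.
  intros HL s t Hs Ht Ps. destruct (classic (P t)) as [|nPt]; auto. exfalso.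
  destruct (Rtotal_order s t) as [h|[h|h]].
  - apply (conn_dir a b P HL s t); auto.
  - subst; tauto.
  - apply (conn_dir a b (fun u => ~ P u)) with t s; auto.
    intros t0 Ht0. apply (filter_imp (fun u => P u <-> P t0)). intros; tauto. auto.
Qed.

Lemma cont_loc_pos (g : R -> R) t : continuous g t -> 0 < g t -> locally t (fun u => 0 < g u).
Proof.
  intros Hc Hp. apply continuity_pt_filterlim in Hc. apply continuity_pt_locally with (eps := mkposreal _ Hp) in Hc.
  revert Hc. apply filter_imp. simpl. intros u Hu. apply Rabs_def2 in Hu. lra.
Qed.

Lemma sign_const a b (g : R -> R) :
  (forall s, in_interval a b s -> continuous g s /\ g s <> 0) ->
  forall s t, in_interval a b s -> in_interval a b t -> 0 < g s * g t.
Proof.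
  intros H.
  assert (HL : forall t, in_interval a b t -> locally t (fun u => 0 < g u <-> 0 < g t)).
  { intros t Ht. destruct (H t Ht) as [Hc Hn]. destruct (Rlt_dec 0 (g t)).
    - apply (filter_imp (fun u => 0 < g u)). intros; tauto. apply cont_loc_pos; auto.
    - apply (filter_imp (fun u => 0 < - g u)). intros; lra. apply cont_loc_pos.
      apply cont_opp; auto. lra. }
  intros s t Hs Ht. destruct (H s Hs) as [_ Hns]. destruct (H t Ht) as [_ Hnt].
  destruct (Rlt_dec 0 (g s)).
  - assert (0 < g t) by (apply (connect a b _ HL s t); auto). nra.
  - assert (~ 0 < g t). { intro. apply n. apply (connect a b _ HL t s); auto. } nra.
Qed.


Lemma const_of_d0 a b (f : R -> R) :
  (forall s, in_interval a b s -> is_derive f s 0) ->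
  forall s t, in_interval a b s -> in_interval a b t -> f s = f t.
Proof.
  intros H.
  assert (K : forall s t, in_interval a b s -> in_interval a b t -> s < t -> f s = f t).
  { intros s t Hs Ht Hst.
    assert (HD : forall c, s <= c <= t -> derivable_pt_lim f c ((fun _ => 0) c)).
    { intros c Hc. apply is_derive_Reals. apply H. apply (I_between a b s t); auto.
      rewrite Rmin_left, Rmax_right; lra. }
    destruct (MVT_cor2 f (fun _ => 0) s t Hst HD) as [c [Hc _]]. lra. }
  intros s t Hs Ht. destruct (Rtotal_order s t) as [h|[h|h]].
  apply K; auto. subst; auto. symmetry; apply K; auto.
Qed.

Lemma d0_of_const a b (f : R -> R) k :
  (forall s, in_interval a b s -> f s = k) ->
  forall s, in_interval a b s -> is_derive f s 0.
Proof.
  intros H s Hs. apply (is_derive_ext_loc (fun _ => k)). 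
  apply (filter_imp (in_interval a b)). intros u Hu; symmetry; auto. apply I_open; auto.
  apply isd_const.
Qed.

Lemma isolated_zero (f : R -> R) t l : is_derive f t l -> l <> 0 -> f t = 0 ->
  locally t (fun u => u <> t -> f u <> 0).
Proof.
  intros H Hl H0. apply is_derive_Reals in H.
  assert (He : 0 < Rabs l) by (apply Rabs_pos_lt; auto).
  destruct (H _ He) as [d Hd].
  assert (K : forall u : R, Rabs (u - t) < d -> u <> t -> f u <> 0).
  2: { exists d. intros u Hu. apply K. exact Hu. }
  intros u Hu Hut Hfu.
  assert (Hh : u - t <> 0) by lra.
  specialize (Hd (u - t) Hh Hu). replace (t + (u - t)) with u in Hd by ring.
  rewrite Hfu, H0 in Hd. replace ((0 - 0) / (u - t) - l) with (- l) in Hd by (field; auto).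
  rewrite Rabs_Ropp in Hd. lra.
Qed.

Lemma deriv_loc_zero (f : R -> R) t l : is_derive f t l ->
  locally t (fun u => f u = 0) -> l = 0.
Proof.
  intros H Hl. apply is_derive_unique in H. rewrite <- H.
  rewrite (Derive_ext_loc f (fun _ => 0)); auto. apply Derive_const.
Qed.

Lemma hv_dot (X : R -> vec3) s X' d : has_vderive X s X' ->
  is_derive (fun t => dot (X t) d) s (dot X' d).
Proof.
  intros [H1 [H2 H3]]. unfold dot.
  apply isd_plus; [apply isd_plus|]; 
  (eapply is_derive_ext; [intros; apply Rmult_comm|]);
  rewrite Rmult_comm; apply is_derive_scal; auto.
Qed.

Lemma vnorm1 v : vnorm v = 1 -> dot v v = 1.
Proof.
  unfold vnorm. intros H. assert (0 <= dot v v) by (unfold dot; nra).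
  rewrite <- (sqrt_sqrt (dot v v)); auto. rewrite H; ring.
Qed.

Lemma cross_T u t : dot (cross u t) t = 0.
Proof. destruct u, t; unfold dot, cross; simpl; ring. Qed.
Lemma cross_U u t : dot (cross u t) u = 0.
Proof. destruct u, t; unfold dot, cross; simpl; ring. Qed.
Lemma cross_n u t : dot (cross u t) (cross u t) = dot u u * dot t t - (dot u t)^2.
Proof. destruct u, t; unfold dot, cross; simpl; ring. Qed.
Lemma gram u t d : (dot (cross u t) d)^2 = dot u u * dot t t * dot d d
  + 2 * dot u t * dot t d * dot d u - dot u u * (dot t d)^2 - dot t t * (dot u d)^2
  - dot d d * (dot u t)^2.
Proof. destruct u, t, d; unfold dot, cross; simpl; ring. Qed.
Lemma dot_sym u v : dot u v = dot v u.
Proof. destruct u, v; unfold dot; simpl; ring. Qed.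

Lemma frame_decomp T U d : dot T T = 1 -> dot U U = 1 -> dot T U = 0 ->
  dot d d = (dot T d)^2 + (dot (cross U T) d)^2 + (dot U d)^2.
Proof.
  intros h1 h2 h3. rewrite gram. rewrite (dot_sym U T), h1, h2, h3, (dot_sym d U). ring.
Qed.


Definition HypF a b (alpha T V U : R -> vec3) (kg kn tg : R -> R) :=
  vsmooth_on (in_interval a b) alpha /\ vsmooth_on (in_interval a b) U /\
  darboux_frame (in_interval a b) alpha T V U kg kn tg /\
  (forall s, in_interval a b s -> kn s <> 0 \/ tg s <> 0).

Lemma dot_lin a x b y z : dot (vadd (vscal a x) (vscal b y)) z = a * dot x z + b * dot y z.
Proof. destruct x, y, z; unfold dot; simpl; ring. Qed.

Lemma vD_unique X s X' : has_vderive X s X' -> vDerive X s = X'.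
Proof.
  intros [h1 [h2 h3]]. destruct X' as [x1 x2 x3]. unfold vDerive. simpl in *.
  f_equal; apply is_derive_unique; auto.
Qed.

Lemma frame a b alpha T V U kg kn tg s : HypF a b alpha T V U kg kn tg -> in_interval a b s ->
  dot (T s) (T s) = 1 /\ dot (U s) (U s) = 1 /\ dot (T s) (U s) = 0 /\
  dot (V s) (T s) = 0 /\ dot (V s) (U s) = 0 /\ dot (V s) (V s) = 1 /\
  (forall d, dot d d = (dot (T s) d)^2 + (dot (V s) d)^2 + (dot (U s) d)^2).
Proof.
  intros [_ [_ [H _]]] Hs. destruct (H s Hs) as [_ [n1 [n2 [o [eV _]]]]].
  apply vnorm1 in n1. apply vnorm1 in n2.
  rewrite eV. split; auto. split; auto. split; auto. split. apply cross_T. split. apply cross_U.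
  split. rewrite cross_n, n1, n2, (dot_sym (U s)), o. ring.
  intros d. apply frame_decomp; auto.
Qed.

Ltac c1 := repeat match goal with
  | |- C1 _ _ (fun t => _ + _) => apply C1_plus
  | |- C1 _ _ (fun t => _ * _) => apply C1_mult
  | |- C1 _ _ (fun t => - _) => apply C1_opp
  end.

Lemma reg a b alpha T V U kg kn tg : HypF a b alpha T V U kg kn tg ->
  (C1 a b (fun s => v1 (T s)) /\ C1 a b (fun s => v2 (T s)) /\ C1 a b (fun s => v3 (T s))) /\
  (C1 a b (fun s => v1 (V s)) /\ C1 a b (fun s => v2 (V s)) /\ C1 a b (fun s => v3 (V s))) /\
  (C1 a b (fun s => v1 (U s)) /\ C1 a b (fun s => v2 (U s)) /\ C1 a b (fun s => v3 (U s))) /\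
  C1 a b kn /\ C1 a b tg /\ (forall s, in_interval a b s -> continuous kg s).
Proof.
  intros HH. pose proof HH as [[A1 [A2 A3]] [[U1 [U2 U3]] [D Hn]]].
  assert (HT : C1 a b (fun s => v1 (T s)) /\ C1 a b (fun s => v2 (T s)) /\ C1 a b (fun s => v3 (T s))).
  { split; [|split]; [ apply (C1_ext a b _ (Derive (fun t => v1 (alpha t)))); [|apply smooth_C1D; auto]
                     | apply (C1_ext a b _ (Derive (fun t => v2 (alpha t)))); [|apply smooth_C1D; auto]
                     | apply (C1_ext a b _ (Derive (fun t => v3 (alpha t)))); [|apply smooth_C1D; auto]];
    intros s Hs; destruct (D s Hs) as [[h1 [h2 h3]] _]; symmetry; apply is_derive_unique; auto. }
  assert (HU : C1 a b (fun s => v1 (U s)) /\ C1 a b (fun s => v2 (U s)) /\ C1 a b (fun s => v3 (U s))).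
  { split; [|split]; apply smooth_C1; auto. }
  destruct HT as [T1 [T2 T3]]. destruct HU as [V1' [V2' V3']].
  assert (HV : C1 a b (fun s => v1 (V s)) /\ C1 a b (fun s => v2 (V s)) /\ C1 a b (fun s => v3 (V s))).
  { split; [|split];
    [ apply (C1_ext a b _ (fun s => v2 (U s) * v3 (T s) + - (v3 (U s) * v2 (T s))))
    | apply (C1_ext a b _ (fun s => v3 (U s) * v1 (T s) + - (v1 (U s) * v3 (T s))))
    | apply (C1_ext a b _ (fun s => v1 (U s) * v2 (T s) + - (v2 (U s) * v1 (T s))))];
    try (intros s Hs; destruct (D s Hs) as [_ [_ [_ [_ [eV _]]]]]; rewrite eV; simpl; ring);
    c1; auto. }
  destruct HV as [W1 [W2 W3]].
  assert (dU : forall s, in_interval a b s -> vDerive U s = vadd (vscal (- kn s) (T s)) (vscal (- tg s) (V s))).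
  { intros s Hs. apply vD_unique. apply D; auto. }
  assert (dT : forall s, in_interval a b s -> vDerive T s = vadd (vscal (kg s) (V s)) (vscal (kn s) (U s))).
  { intros s Hs. apply vD_unique. apply D; auto. }
  split; [auto|]. split; [auto|]. split; [auto|]. split; [|split].
  - apply (C1_ext a b _ (fun s => - (Derive (fun t => v1 (U t)) s * v1 (T s) + Derive (fun t => v2 (U t)) s * v2 (T s)
        + Derive (fun t => v3 (U t)) s * v3 (T s)))).
    + intros s Hs. pose proof (dU s Hs) as E. unfold vDerive in E. 
      destruct (frame a b alpha T V U kg kn tg s HH Hs) as [f1 [f2 [f3 [f4 [f5 [f6 _]]]]]].
      change (kn s = - dot (vDerive U s) (T s)). rewrite dU, dot_lin by auto. rewrite f1, f4. ring.
    + c1; auto; apply smooth_C1D; auto.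
  - apply (C1_ext a b _ (fun s => - (Derive (fun t => v1 (U t)) s * v1 (V s) + Derive (fun t => v2 (U t)) s * v2 (V s)
        + Derive (fun t => v3 (U t)) s * v3 (V s)))).
    + intros s Hs.
      destruct (frame a b alpha T V U kg kn tg s HH Hs) as [f1 [f2 [f3 [f4 [f5 [f6 _]]]]]].
      change (tg s = - dot (vDerive U s) (V s)). rewrite dU, dot_lin by auto. rewrite (dot_sym (T s)), f4, f6. ring.
    + c1; auto; apply smooth_C1D; auto.
  - intros s Hs. apply (continuous_ext_loc (T:=R_UniformSpace) (U:=R_UniformSpace) kg (fun s => Derive (fun t => v1 (T t)) s * v1 (V s) + Derive (fun t => v2 (T t)) s * v2 (V s)
        + Derive (fun t => v3 (T t)) s * v3 (V s))).
    + apply (eq_loc a b); auto. intros u Hu.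
      destruct (frame a b alpha T V U kg kn tg u HH Hu) as [f1 [f2 [f3 [f4 [f5 [f6 _]]]]]].
      change (dot (vDerive T u) (V u) = kg u). rewrite dT, dot_lin by auto. rewrite f6, (dot_sym (U u)), f5. ring.
    + apply cont_plus; [apply cont_plus|]; apply cont_mult.
      exact (proj2 (T1 s Hs)). exact (C1_cont a b _ s W1 Hs).
      exact (proj2 (T2 s Hs)). exact (C1_cont a b _ s W2 Hs).
      exact (proj2 (T3 s Hs)). exact (C1_cont a b _ s W3 Hs).
Qed.


Lemma hv_add X Y s X' Y' : has_vderive X s X' -> has_vderive Y s Y' ->
  has_vderive (fun t => vadd (X t) (Y t)) s (vadd X' Y').
Proof. intros [a1 [a2 a3]] [b1 [b2 b3]]. split; [|split]; simpl; apply isd_plus; auto. Qed.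

Lemma hv_scal f X s f' X' : is_derive f s f' -> has_vderive X s X' ->
  has_vderive (fun t => vscal (f t) (X t)) s (vadd (vscal f' (X s)) (vscal (f s) X')).
Proof. intros h [a1 [a2 a3]]. split; [|split]; simpl; apply isd_mult; auto. Qed.

Lemma hv_ext a b X Y s X' : (forall u, in_interval a b u -> Y u = X u) -> in_interval a b s ->
  has_vderive X s X' -> has_vderive Y s X'.
Proof.
  intros E Hs [a1 [a2 a3]]. split; [|split]; (eapply is_derive_ext_loc; [|eauto]);
  apply (eq_loc a b); auto; intros u Hu; rewrite E; auto.
Qed.

Lemma dot_add_l x y z : dot (vadd x y) z = dot x z + dot y z.
Proof. destruct x, y, z; unfold dot; simpl; ring. Qed.
Lemma dot_scal_l r x z : dot (vscal r x) z = r * dot x z.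
Proof. destruct x, z; unfold dot; simpl; ring. Qed.

Definition HypG a b (alpha T V U : R -> vec3) (y1 y2 y3 Rf : R -> R) (gamma : R -> vec3) :=
  smooth_on (in_interval a b) y1 /\ smooth_on (in_interval a b) y2 /\ smooth_on (in_interval a b) y3 /\
  (forall s, in_interval a b s ->
     gamma s = vadd (alpha s) (vadd (vscal (y1 s) (T s))
                 (vadd (vscal (y2 s) (V s)) (vscal (y3 s) (U s))))) /\
  (forall s, in_interval a b s ->
     has_vderive gamma s (vscal (Rf s) (U s)) /\ Rf s <> 0).

Lemma Rf_formula a b alpha T V U kg kn tg y1 y2 y3 Rf gamma :
  HypF a b alpha T V U kg kn tg -> HypG a b alpha T V U y1 y2 y3 Rf gamma ->
  forall s, in_interval a b s -> Rf s = y1 s * kn s + y2 s * tg s + Derive y3 s.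
Proof.
  intros HF [S1 [S2 [S3 [Eg Dg]]]] s Hs.
  pose proof HF as [_ [_ [D _]]]. destruct (D s Hs) as [dA [_ [_ [_ [_ [dT [dV dU]]]]]]].
  assert (d1 : is_derive y1 s (Derive y1 s)) by (apply Derive_correct; exact (S1 1%nat s Hs)).
  assert (d2 : is_derive y2 s (Derive y2 s)) by (apply Derive_correct; exact (S2 1%nat s Hs)).
  assert (d3 : is_derive y3 s (Derive y3 s)) by (apply Derive_correct; exact (S3 1%nat s Hs)).
  pose proof (hv_add _ _ s _ _ dA (hv_add _ _ s _ _ (hv_scal _ _ s _ _ d1 dT)
     (hv_add _ _ s _ _ (hv_scal _ _ s _ _ d2 dV) (hv_scal _ _ s _ _ d3 dU)))) as HG.
  apply (hv_ext a b _ gamma) in HG; auto.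
  apply vD_unique in HG. destruct (Dg s Hs) as [HG' _]. apply vD_unique in HG'.
  rewrite HG' in HG. apply (f_equal (fun v => dot v (U s))) in HG.
  rewrite !dot_add_l, !dot_scal_l, !dot_add_l, !dot_scal_l in HG.
  destruct (frame a b alpha T V U kg kn tg s HF Hs) as [f1 [f2 [f3 [f4 [f5 [f6 _]]]]]].
  rewrite f2, f3, f5 in HG. lra.
Qed.

Lemma Rf_cont a b alpha T V U kg kn tg y1 y2 y3 Rf gamma :
  HypF a b alpha T V U kg kn tg -> HypG a b alpha T V U y1 y2 y3 Rf gamma ->
  forall s, in_interval a b s -> continuous Rf s /\ Rf s <> 0.
Proof.
  intros HF HG s Hs. split. 2: apply HG; auto.
  destruct (reg a b alpha T V U kg kn tg HF) as [_ [_ [_ [Ckn [Ctg _]]]]].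
  pose proof HG as [S1 [S2 [S3 _]]].
  apply (continuous_ext_loc (T:=R_UniformSpace) (U:=R_UniformSpace) Rf (fun s => y1 s * kn s + y2 s * tg s + Derive y3 s)).
  - apply (eq_loc a b); auto. intros u Hu. symmetry. apply (Rf_formula a b alpha T V U kg kn tg y1 y2 y3 Rf gamma); auto.
  - apply cont_plus; [apply cont_plus|]; try apply cont_mult.
    exact (C1_cont a b _ s (smooth_C1 a b _ S1) Hs). exact (C1_cont a b _ s Ckn Hs).
    exact (C1_cont a b _ s (smooth_C1 a b _ S2) Hs). exact (C1_cont a b _ s Ctg Hs).
    exact (proj2 (smooth_C1 a b _ S3 s Hs)).
Qed.


Lemma sgn_eq r r0 : 0 < r * r0 -> r / Rabs r = r0 / Rabs r0.
Proof.
  intros H. destruct (Rcase_abs r), (Rcase_abs r0).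
  - rewrite (Rabs_left r), (Rabs_left r0) by auto. field; lra.
  - nra.
  - nra.
  - rewrite (Rabs_right r), (Rabs_right r0) by auto. assert (r <> 0) by nra. assert (r0 <> 0) by nra. field; auto.
Qed.

Lemma sgn_sq r : r <> 0 -> (r / Rabs r) * (r / Rabs r) = 1.
Proof.
  intros H. destruct (Rcase_abs r).
  - rewrite Rabs_left by auto. field; lra.
  - rewrite Rabs_right by auto. field; auto.
Qed.

Lemma dot_ss r x : dot (vscal r x) (vscal r x) = r^2 * dot x x.
Proof. destruct x; unfold dot; simpl; ring. Qed.

Lemma unit_scal r x d : dot x x = 1 -> r <> 0 ->
  dot (vunit (vscal r x)) d = r / Rabs r * dot x d.
Proof.
  intros h hr. unfold vunit, vnorm. rewrite dot_ss, h, Rmult_1_r.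
  rewrite <- Rsqr_pow2, sqrt_Rsqr_abs. rewrite dot_scal_l, dot_scal_l. unfold Rdiv. ring.
Qed.

Lemma helix_iso a b alpha T V U kg kn tg y1 y2 y3 Rf gamma :
  HypF a b alpha T V U kg kn tg -> HypG a b alpha T V U y1 y2 y3 Rf gamma ->
  (general_helix (in_interval a b) gamma <-> isophote (in_interval a b) U).
Proof.
  intros HF HG.
  pose proof (Rf_cont a b alpha T V U kg kn tg y1 y2 y3 Rf gamma HF HG) as RC.
  pose proof (sign_const a b Rf RC) as SC.
  pose proof HG as [_ [_ [_ [_ Dg]]]].
  assert (KEY : forall s d, in_interval a b s ->
    dot (vunit (vDerive gamma s)) d = Rf s / Rabs (Rf s) * dot (U s) d).
  { intros s d Hs. destruct (Dg s Hs) as [h1 h2]. rewrite (vD_unique _ _ _ h1).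
    apply unit_scal; auto. apply (frame a b alpha T V U kg kn tg s HF Hs). }
  destruct (classic (exists s0, in_interval a b s0)) as [[s0 Hs0]|Hno].
  2: { split.
    - intros [_ [d [k [nd _]]]]. exists d, k. split; auto. intros s Hs; exfalso; eauto.
    - intros [l [k [nl _]]]. split. intros s Hs; exfalso; eauto. exists l, k. split; auto.
      intros s Hs; exfalso; eauto. }
  pose (sg := Rf s0 / Rabs (Rf s0)).
  assert (SG : forall s, in_interval a b s -> Rf s / Rabs (Rf s) = sg).
  { intros s Hs. apply sgn_eq. apply SC; auto. }
  assert (SG2 : sg * sg = 1). { apply sgn_sq. apply RC; auto. }
  split.
  - intros [_ [d [k [nd H]]]]. exists d, (k * sg). split; auto. intros s Hs.
    specialize (H s Hs). rewrite KEY, SG in H by auto. rewrite <- H.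
    transitivity (sg * sg * dot (U s) d). rewrite SG2; ring. ring.
  - intros [l [k [nl H]]]. split.
    + intros s Hs. destruct (Dg s Hs) as [h1 h2]. split.
      * destruct h1 as [e1 [e2 e3]]. split; [|split]; eexists; eauto.
      * rewrite (vD_unique _ _ _ h1). intros E.
        apply (f_equal (fun v => dot v v)) in E. rewrite dot_ss in E.
        rewrite (proj1 (proj2 (frame a b alpha T V U kg kn tg s HF Hs))) in E.
        unfold dot in E; simpl in E. apply h2. nra.
    + exists l, (sg * k). split; auto. intros s Hs. rewrite KEY, SG, H; auto.
Qed.


Lemma cont_loc_neq (g : R -> R) t : continuous g t -> g t <> 0 -> locally t (fun u => g u <> 0).
Proof.
  intros Hc Hn. destruct (Rlt_dec 0 (g t)).
  - apply (filter_imp (fun u => 0 < g u)). intros; lra. apply cont_loc_pos; auto.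
  - apply (filter_imp (fun u => 0 < - g u)). intros; lra. apply cont_loc_pos. apply cont_opp; auto. lra.
Qed.

Lemma dichotomy a b (kap beta z w : R -> R) c :
  (forall s, in_interval a b s -> continuous kap s) ->
  (forall s, in_interval a b s -> is_derive beta s (z s * w s - kap s * c)) ->
  (forall s, in_interval a b s -> kap s * beta s = 0) ->
  (forall s, in_interval a b s -> c*c + beta s * beta s + z s * z s = 1) ->
  (forall s, in_interval a b s -> 0 < w s) -> c * c < 1 ->
  (forall s, in_interval a b s -> beta s = 0) \/ (forall s, in_interval a b s -> kap s = 0).
Proof.
  intros Ck Db KB Id Wp Hc.
  set (P := fun t : R => locally t (fun u => beta u = 0)).
  set (A := fun t : R => locally t (fun u => kap u = 0)).
  assert (disj : forall u, in_interval a b u -> A u -> P u -> False).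
  { intros u Hu Au Pu. pose proof (deriv_loc_zero beta u _ (Db u Hu) Pu) as E.
    apply locally_singleton in Au. apply locally_singleton in Pu.
    rewrite Au in E. specialize (Id u Hu). rewrite Pu in Id. specialize (Wp u Hu).
    assert (z u <> 0) by nra. nra. }
  assert (nPA : forall t, in_interval a b t -> ~ P t -> A t).
  { intros t Ht nP. destruct (Req_dec (kap t) 0) as [k0|k0].
    - destruct (Req_dec (beta t) 0) as [b0|b0].
      + assert (Hd : z t * w t - kap t * c <> 0).
        { rewrite k0. specialize (Id t Ht). rewrite b0 in Id. specialize (Wp t Ht).
          assert (z t <> 0) by nra. nra. }
        pose proof (isolated_zero beta t _ (Db t Ht) Hd b0) as Hiso.
        unfold A. generalize (filter_and _ _ Hiso (I_open a b t Ht)). apply filter_imp.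
        intros u [h1 h2]. destruct (Req_dec u t) as [->|ne]; auto.
        specialize (KB u h2). specialize (h1 ne). nra.
      + assert (Cb : continuous beta t) by (apply exd_cont; eexists; apply Db; auto).
        unfold A. generalize (filter_and _ _ (cont_loc_neq beta t Cb b0) (I_open a b t Ht)). apply filter_imp.
        intros u [h1 h2]. specialize (KB u h2). nra.
    - exfalso. apply nP. unfold P.
      generalize (filter_and _ _ (cont_loc_neq kap t (Ck t Ht) k0) (I_open a b t Ht)). apply filter_imp.
      intros u [h1 h2]. specialize (KB u h2). nra. }
  assert (LC : forall t, in_interval a b t -> locally t (fun u => P u <-> P t)).
  { intros t Ht. destruct (classic (P t)) as [Pt|nPt].
    - generalize (locally_locally _ _ Pt). apply filter_imp. intros u Hu. unfold P. tauto.
    - generalize (filter_and _ _ (locally_locally _ _ (nPA t Ht nPt)) (I_open a b t Ht)). apply filter_imp.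
      intros u [h1 h2]. split; intros; [exfalso; apply (disj u h2 h1); auto | tauto]. }
  destruct (classic (exists t, in_interval a b t /\ P t)) as [[t [Ht Pt]]|Hno].
  - left. intros s Hs. apply (locally_singleton _ _ (connect a b P LC t s Ht Hs Pt)).
  - right. intros s Hs. apply (locally_singleton _ _ (nPA s Hs (fun h => Hno (ex_intro _ s (conj Hs h))))).
Qed.


Definition wf (kn tg : R -> R) s := sqrt (tg s * tg s + kn s * kn s).
Definition pf kn tg s := tg s * / wf kn tg s.
Definition qf kn tg s := kn s * / wf kn tg s.

Lemma isd_eq (f : R -> R) (s l l' : R) : is_derive f s l -> l = l' -> is_derive f s l'.
Proof. intros; subst; auto. Qed.
Lemma isd_opp (f : R -> R) s l : is_derive f s l -> is_derive (fun t => - f t) s (- l).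
Proof. intros; apply (is_derive_opp (K:=R_AbsRing) (V:=R_NormedModule)); auto. Qed.


Lemma w_pos a b alpha T V U kg kn tg s : HypF a b alpha T V U kg kn tg -> in_interval a b s ->
  0 < wf kn tg s /\ wf kn tg s * wf kn tg s = tg s * tg s + kn s * kn s.
Proof.
  intros [_ [_ [_ Hn]]] Hs. assert (0 < tg s * tg s + kn s * kn s).
  { destruct (Hn s Hs); nra. }
  split. apply sqrt_lt_R0; auto. apply sqrt_sqrt; lra.
Qed.

Lemma pq_alg a b alpha T V U kg kn tg s : HypF a b alpha T V U kg kn tg -> in_interval a b s ->
  pf kn tg s * pf kn tg s + qf kn tg s * qf kn tg s = 1 /\
  pf kn tg s * kn s - qf kn tg s * tg s = 0 /\
  qf kn tg s * kn s + pf kn tg s * tg s = wf kn tg s.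
Proof.
  intros HF Hs. destruct (w_pos a b alpha T V U kg kn tg s HF Hs) as [h1 h2].
  unfold pf, qf. split; [|split].
  - transitivity ((tg s * tg s + kn s * kn s) / (wf kn tg s * wf kn tg s)). field; lra.
    rewrite h2. apply Rinv_r. nra.
  - field; lra.
  - transitivity ((tg s * tg s + kn s * kn s) / wf kn tg s). field; lra.
    rewrite <- h2. field; lra.
Qed.

Lemma C1_pq a b alpha T V U kg kn tg : HypF a b alpha T V U kg kn tg ->
  C1 a b (pf kn tg) /\ C1 a b (qf kn tg).
Proof.
  intros HF. destruct (reg a b alpha T V U kg kn tg HF) as [_ [_ [_ [Ckn [Ctg _]]]]].
  assert (Cw : C1 a b (fun s => / wf kn tg s)).
  { apply C1_inv. unfold wf. apply C1_sqrt. apply C1_plus; apply C1_mult; auto.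
    intros s Hs. destruct (w_pos a b alpha T V U kg kn tg s HF Hs) as [h1 h2]. nra.
    intros s Hs. destruct (w_pos a b alpha T V U kg kn tg s HF Hs) as [h1 h2]. lra. }
  split; apply C1_mult; auto.
Qed.


Lemma alg_f P Q P' Q' X Y Z KG KN TG : P*P+Q*Q = 1 -> P*P'+Q*Q' = 0 -> P*KN - Q*TG = 0 ->
  (P'*X + P*(KG*Y + KN*Z)) + -(Q'*Y + Q*(-KG*X + TG*Z)) = (KG - (P*Q' - Q*P'))*(Q*X+P*Y).
Proof.
  intros H1 H2 H3.
  assert (H : (P'*X + P*(KG*Y + KN*Z)) + -(Q'*Y + Q*(-KG*X + TG*Z)) - (KG - (P*Q' - Q*P'))*(Q*X+P*Y)
    = Z*(P*KN-Q*TG) + X*(P*(P*P'+Q*Q') + P'*(1-(P*P+Q*Q))) - Y*(Q*(P*P'+Q*Q') + Q'*(1-(P*P+Q*Q)))) by ring.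
  rewrite H1, H2, H3 in H. lra.
Qed.

Lemma alg_b P Q P' Q' X Y Z KG KN TG W : P*P+Q*Q = 1 -> P*P'+Q*Q' = 0 -> Q*KN + P*TG = W ->
  (Q'*X + Q*(KG*Y + KN*Z)) + (P'*Y + P*(-KG*X + TG*Z)) = Z*W - (KG - (P*Q' - Q*P'))*(P*X + -(Q*Y)).
Proof.
  intros H1 H2 H3.
  assert (H : (Q'*X + Q*(KG*Y + KN*Z)) + (P'*Y + P*(-KG*X + TG*Z)) - (Z*W - (KG - (P*Q' - Q*P'))*(P*X + -(Q*Y)))
    = Z*(Q*KN+P*TG-W) + X*(Q*(P*P'+Q*Q') + Q'*(1-(P*P+Q*Q))) + Y*(P*(P*P'+Q*Q') + P'*(1-(P*P+Q*Q)))) by ring.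
  rewrite H1, H2, H3 in H. lra.
Qed.

Definition fD (T V : R -> vec3) (kn tg : R -> R) d s :=
  pf kn tg s * dot (T s) d + - (qf kn tg s * dot (V s) d).
Definition bD (T V : R -> vec3) (kn tg : R -> R) d s :=
  qf kn tg s * dot (T s) d + pf kn tg s * dot (V s) d.
Definition kap (kg kn tg : R -> R) s :=
  kg s - (pf kn tg s * Derive (qf kn tg) s - qf kn tg s * Derive (pf kn tg) s).

Lemma pp_deriv a b alpha T V U kg kn tg s : HypF a b alpha T V U kg kn tg -> in_interval a b s ->
  pf kn tg s * Derive (pf kn tg) s + qf kn tg s * Derive (qf kn tg) s = 0.
Proof.
  intros HF Hs. destruct (C1_pq a b alpha T V U kg kn tg HF) as [Cp Cq].
  assert (dp : is_derive (pf kn tg) s (Derive (pf kn tg) s)) by (apply Derive_correct, Cp; auto).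
  assert (dq : is_derive (qf kn tg) s (Derive (qf kn tg) s)) by (apply Derive_correct, Cq; auto).
  pose proof (isd_plus _ _ s _ _ (isd_mult _ _ s _ _ dp dp) (isd_mult _ _ s _ _ dq dq)) as H.
  pose proof (d0_of_const a b (fun t => pf kn tg t * pf kn tg t + qf kn tg t * qf kn tg t) 1) as H0.
  assert (H1 : is_derive (fun t => pf kn tg t * pf kn tg t + qf kn tg t * qf kn tg t) s 0).
  { apply H0; auto. intros u Hu. apply (pq_alg a b alpha T V U kg kn tg u HF Hu). }
  apply is_derive_unique in H. apply is_derive_unique in H1. rewrite H in H1. lra.
Qed.

Lemma derivs a b alpha T V U kg kn tg d s : HypF a b alpha T V U kg kn tg -> in_interval a b s ->
  is_derive (fD T V kn tg d) s (kap kg kn tg s * bD T V kn tg d s) /\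
  is_derive (bD T V kn tg d) s (dot (U s) d * wf kn tg s - kap kg kn tg s * fD T V kn tg d s) /\
  is_derive (fun t => dot (U t) d) s (- (wf kn tg s * bD T V kn tg d s)).
Proof.
  intros HF Hs. destruct (C1_pq a b alpha T V U kg kn tg HF) as [Cp Cq].
  assert (dp : is_derive (pf kn tg) s (Derive (pf kn tg) s)) by (apply Derive_correct, Cp; auto).
  assert (dq : is_derive (qf kn tg) s (Derive (qf kn tg) s)) by (apply Derive_correct, Cq; auto).
  pose proof HF as [_ [_ [D _]]]. destruct (D s Hs) as [_ [_ [_ [_ [_ [dT [dV dU]]]]]]].
  pose proof (hv_dot _ _ _ d dT) as dx. pose proof (hv_dot _ _ _ d dV) as dy. pose proof (hv_dot _ _ _ d dU) as dz.
  rewrite dot_lin in dx, dy, dz.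
  destruct (pq_alg a b alpha T V U kg kn tg s HF Hs) as [E1 [E3 E4]].
  pose proof (pp_deriv a b alpha T V U kg kn tg s HF Hs) as E2.
  split; [|split].
  - eapply isd_eq. unfold fD. apply isd_plus. apply isd_mult; eauto. apply isd_opp. apply isd_mult; eauto.
    unfold kap, bD. apply alg_f; auto.
  - eapply isd_eq. unfold bD. apply isd_plus; apply isd_mult; eauto.
    unfold kap, fD. apply alg_b; auto.
  - eapply isd_eq. apply dz. unfold bD.
    destruct (w_pos a b alpha T V U kg kn tg s HF Hs) as [h1 h2].
    unfold pf, qf. field. lra.
Qed.


Lemma dot_vsub a x b y z : dot (vsub (vscal a x) (vscal b y)) z = a * dot x z - b * dot y z.
Proof. destruct x, y, z; unfold dot; simpl; ring. Qed.

Lemma osc_rel a b alpha T V U kg kn tg s d : HypF a b alpha T V U kg kn tg -> in_interval a b s ->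
  vnorm (osc_darboux T V kn tg s) = wf kn tg s /\
  dot (vunit (osc_darboux T V kn tg s)) d = fD T V kn tg d s /\
  dot (U s) (osc_darboux T V kn tg s) = 0.
Proof.
  intros HF Hs. destruct (frame a b alpha T V U kg kn tg s HF Hs) as [f1 [f2 [f3 [f4 [f5 [f6 _]]]]]].
  destruct (w_pos a b alpha T V U kg kn tg s HF Hs) as [h1 h2].
  assert (N : vnorm (osc_darboux T V kn tg s) = wf kn tg s).
  { unfold vnorm, wf, osc_darboux. f_equal. rewrite dot_vsub.
    rewrite (dot_sym (T s)), (dot_sym (V s)), !dot_vsub.
    rewrite f1, f6, f4, (dot_sym (T s)), f4. ring. }
  split; [auto|split].
  - unfold vunit. rewrite dot_scal_l, N. unfold osc_darboux. rewrite dot_vsub.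
    unfold fD, pf, qf. field. lra.
  - unfold osc_darboux. rewrite dot_sym, dot_vsub, f3, f5. ring.
Qed.

Lemma kap_cont a b alpha T V U kg kn tg s : HypF a b alpha T V U kg kn tg -> in_interval a b s ->
  continuous (kap kg kn tg) s.
Proof.
  intros HF Hs. destruct (reg a b alpha T V U kg kn tg HF) as [_ [_ [_ [_ [_ Ckg]]]]].
  destruct (C1_pq a b alpha T V U kg kn tg HF) as [Cp Cq].
  unfold kap. apply cont_plus. auto. apply cont_opp. apply cont_plus.
  apply cont_mult. apply (C1_cont a b); auto. apply Cq; auto.
  apply cont_opp. apply cont_mult. apply (C1_cont a b); auto. apply Cp; auto.
Qed.

Lemma ident a b alpha T V U kg kn tg s d : HypF a b alpha T V U kg kn tg -> in_interval a b s ->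
  fD T V kn tg d s * fD T V kn tg d s + bD T V kn tg d s * bD T V kn tg d s + dot (U s) d * dot (U s) d = dot d d.
Proof.
  intros HF Hs. destruct (frame a b alpha T V U kg kn tg s HF Hs) as [_ [_ [_ [_ [_ [_ Dc]]]]]].
  destruct (pq_alg a b alpha T V U kg kn tg s HF Hs) as [E1 _].
  rewrite (Dc d). unfold fD, bD.
  transitivity ((pf kn tg s * pf kn tg s + qf kn tg s * qf kn tg s) * (dot (T s) d * dot (T s) d + dot (V s) d * dot (V s) d)
    + dot (U s) d * dot (U s) d). ring. rewrite E1. ring.
Qed.

Lemma isd_uniq (f : R -> R) s l1 l2 : is_derive f s l1 -> is_derive f s l2 -> l1 = l2.
Proof. intros h1 h2. apply is_derive_unique in h1. apply is_derive_unique in h2. congruence. Qed.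

Lemma vec_ext u v : dot u (V3 1 0 0) = dot v (V3 1 0 0) -> dot u (V3 0 1 0) = dot v (V3 0 1 0) ->
  dot u (V3 0 0 1) = dot v (V3 0 0 1) -> u = v.
Proof. destruct u, v; unfold dot; simpl; intros; f_equal; lra. Qed.

Lemma vnorm_unit v : 0 < vnorm v -> vnorm (vunit v) = 1.
Proof.
  intros H. unfold vunit. unfold vnorm at 1. rewrite dot_ss.
  assert (E : vnorm v * vnorm v = dot v v). { unfold vnorm. apply sqrt_sqrt. unfold dot; nra. }
  rewrite <- E. replace ((/ vnorm v)^2 * (vnorm v * vnorm v)) with 1 by (field; lra). apply sqrt_1.
Qed.

Lemma same_sign_sq x y : 0 < x * y -> x * x = y * y -> x = y.
Proof.
  intros h1 h2. assert (E : (x - y) * (x + y) = 0) by (ring_simplify; lra).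
  apply Rmult_integral in E. destruct E as [E|E]. lra.
  replace y with (- x) in h1 by lra. nra.
Qed.
Lemma sq_zero x : x * x = 0 -> x = 0.
Proof. intros; nra. Qed.
Lemma b_zero c b z : c * c + b * b + z * z = 1 -> ~ c * c < 1 -> b = 0.
Proof. intros; nra. Qed.

Lemma iso_slant a b alpha T V U kg kn tg : HypF a b alpha T V U kg kn tg ->
  (isophote (in_interval a b) U <-> Do_slant_helix (in_interval a b) T V kn tg).
Proof.
  intros HF. split.
  - intros [l [k [nl H]]]. apply vnorm1 in nl as dl.
    assert (B0 : forall s, in_interval a b s -> bD T V kn tg l s = 0).
    { intros s Hs. destruct (derivs a b alpha T V U kg kn tg l s HF Hs) as [_ [_ dz]].
      pose proof (d0_of_const a b (fun t => dot (U t) l) k H s Hs) as dz0.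
      pose proof (isd_uniq _ _ _ _ dz dz0) as dz1.
      destruct (w_pos a b alpha T V U kg kn tg s HF Hs) as [h1 _].
      assert (wf kn tg s * bD T V kn tg l s = 0) by (simpl in dz1; lra).
      apply Rmult_integral in H0. destruct H0; auto. lra. }
    assert (F2 : forall s, in_interval a b s -> fD T V kn tg l s * fD T V kn tg l s = 1 - k * k).
    { intros s Hs. pose proof (ident a b alpha T V U kg kn tg s l HF Hs) as I1.
      rewrite B0, H, dl in I1 by auto. lra. }
    destruct (classic (exists s0, in_interval a b s0)) as [[s0 Hs0]|Hno].
    2: { exists l, 0. split; auto. intros s Hs; exfalso; eauto. }
    exists l, (fD T V kn tg l s0). split; auto. intros s Hs.
    rewrite (proj1 (proj2 (osc_rel a b alpha T V U kg kn tg s l HF Hs))).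
    destruct (Req_dec (fD T V kn tg l s0) 0) as [z0|z0].
    + rewrite z0. apply sq_zero. rewrite (F2 s Hs), <- (F2 s0 Hs0), z0. ring.
    + assert (SC : 0 < fD T V kn tg l s * fD T V kn tg l s0).
      { apply (sign_const a b (fD T V kn tg l)); auto. intros u Hu. split.
        - apply exd_cont. eexists. exact (proj1 (derivs a b alpha T V U kg kn tg l u HF Hu)).
        - intro E. apply z0. apply sq_zero. rewrite (F2 s0 Hs0), <- (F2 u Hu), E. ring. }
      apply same_sign_sq; auto. rewrite (F2 s Hs), (F2 s0 Hs0). ring.
  - intros [d [c [nd H]]]. apply vnorm1 in nd as dd.
    assert (Fc : forall s, in_interval a b s -> fD T V kn tg d s = c).
    { intros s Hs. rewrite <- (H s Hs). symmetry. apply (osc_rel a b alpha T V U kg kn tg s d HF Hs). }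
    assert (KB : forall s, in_interval a b s -> kap kg kn tg s * bD T V kn tg d s = 0).
    { intros s Hs. destruct (derivs a b alpha T V U kg kn tg d s HF Hs) as [df _].
      pose proof (d0_of_const a b _ c Fc s Hs) as d0.
      exact (isd_uniq _ _ _ _ df d0). }
    assert (Id : forall s, in_interval a b s -> c * c + bD T V kn tg d s * bD T V kn tg d s
        + dot (U s) d * dot (U s) d = 1).
    { intros s Hs. pose proof (ident a b alpha T V U kg kn tg s d HF Hs) as I1. rewrite Fc in I1; auto. lra. }
    destruct (classic (exists s0, in_interval a b s0)) as [[s0 Hs0]|Hno].
    2: { exists d, 0. split; auto. intros s Hs; exfalso; eauto. }
    assert (DI : (forall s, in_interval a b s -> bD T V kn tg d s = 0) \/
                 (forall s, in_interval a b s -> kap kg kn tg s = 0)).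
    { destruct (Rlt_dec (c * c) 1) as [lt|ge].
      - apply (dichotomy a b _ _ (fun s => dot (U s) d) (wf kn tg) c); auto.
        + intros s Hs; apply (kap_cont a b alpha T V U kg kn tg s HF Hs).
        + intros s Hs. eapply isd_eq. exact (proj1 (proj2 (derivs a b alpha T V U kg kn tg d s HF Hs))).
          rewrite Fc; auto.
        + intros s Hs. apply (w_pos a b alpha T V U kg kn tg s HF Hs).
      - left. intros s Hs. exact (b_zero _ _ _ (Id s Hs) ge). }
    destruct DI as [B0|K0].
    + exists d, (dot (U s0) d). split; auto. intros s Hs.
      apply (const_of_d0 a b (fun t => dot (U t) d)); [|exact Hs|exact Hs0]. intros u Hu.
      eapply isd_eq. exact (proj2 (proj2 (derivs a b alpha T V U kg kn tg d u HF Hu))). rewrite B0; auto. ring.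
    + assert (WC : forall e s, in_interval a b s -> fD T V kn tg e s = fD T V kn tg e s0).
      { intros e s Hs. apply (const_of_d0 a b (fD T V kn tg e)); [|exact Hs|exact Hs0]. intros u Hu.
        eapply isd_eq. exact (proj1 (derivs a b alpha T V U kg kn tg e u HF Hu)). rewrite K0; auto. ring. }
      exists (vunit (osc_darboux T V kn tg s0)), 0. split.
      * apply vnorm_unit. rewrite (proj1 (osc_rel a b alpha T V U kg kn tg s0 d HF Hs0)).
        apply (w_pos a b alpha T V U kg kn tg s0 HF Hs0).
      * intros s Hs.
        assert (EQ : vunit (osc_darboux T V kn tg s0) = vunit (osc_darboux T V kn tg s)).
        { apply vec_ext;
          [ rewrite (proj1 (proj2 (osc_rel a b alpha T V U kg kn tg s0 (V3 1 0 0) HF Hs0))),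
                    (proj1 (proj2 (osc_rel a b alpha T V U kg kn tg s (V3 1 0 0) HF Hs)))
          | rewrite (proj1 (proj2 (osc_rel a b alpha T V U kg kn tg s0 (V3 0 1 0) HF Hs0))),
                    (proj1 (proj2 (osc_rel a b alpha T V U kg kn tg s (V3 0 1 0) HF Hs)))
          | rewrite (proj1 (proj2 (osc_rel a b alpha T V U kg kn tg s0 (V3 0 0 1) HF Hs0))),
                    (proj1 (proj2 (osc_rel a b alpha T V U kg kn tg s (V3 0 0 1) HF Hs)))];
          symmetry; apply WC; auto. }
        rewrite EQ. unfold vunit. rewrite dot_sym, dot_scal_l, dot_sym.
        rewrite (proj2 (proj2 (osc_rel a b alpha T V U kg kn tg s d HF Hs))). ring.
Qed.


Theorem theorem3p22
  (a b : Rbar) (alpha T V U : R -> vec3) (kg kn tg : R -> R)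
  (y1 y2 y3 Rf : R -> R) (gamma : R -> vec3) :
  Rbar_lt a b ->
  vsmooth_on (in_interval a b) alpha ->
  vsmooth_on (in_interval a b) U ->
  darboux_frame (in_interval a b) alpha T V U kg kn tg ->
  (forall s, in_interval a b s -> kn s <> 0 \/ tg s <> 0) ->
  smooth_on (in_interval a b) y1 ->
  smooth_on (in_interval a b) y2 ->
  smooth_on (in_interval a b) y3 ->
  (forall s, in_interval a b s ->
     gamma s = vadd (alpha s) (vadd (vscal (y1 s) (T s))
                 (vadd (vscal (y2 s) (V s)) (vscal (y3 s) (U s))))) ->
  (forall s, in_interval a b s ->
     has_vderive gamma s (vscal (Rf s) (U s)) /\ Rf s <> 0) ->
  (general_helix (in_interval a b) gamma <-> isophote (in_interval a b) U) /\
  (isophote (in_interval a b) U <-> Do_slant_helix (in_interval a b) T V kn tg).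
Proof.
  intros Hab Sa SU D Hn S1 S2 S3 Eg Dg.
  assert (HF : HypF a b alpha T V U kg kn tg) by (split; [|split; [|split]]; auto).
  assert (HG : HypG a b alpha T V U y1 y2 y3 Rf gamma) by (split; [|split; [|split; [|split]]]; auto).
  split.
  - exact (helix_iso a b alpha T V U kg kn tg y1 y2 y3 Rf gamma HF HG).
  - exact (iso_slant a b alpha T V U kg kn tg HF).
Qed.
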